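(* Let $b\ge 2$ be fixed and $N\ge 2$. Then \[ \int_0^1|\overleftarrow{S}_b(\alpha)|^2\,d\alpha\ll_b N\log N. \]
   Context: For a positive integer $n$ with $L$ digits in base $b$, $n=\sum_{0\leq i<L}\varepsilon_i(n)b^i$ ($\varepsilon_i(n)\in\{0,\dots,b-1\}$, $\varepsilon_{L-1}(n)\neq0$), its digital reverse is $\overleftarrow{n}=\sum_{0\leq i<L}\varepsilon_i(n)b^{L-1-i}$. With $e(x)=\exp(2\pi ix)$, \[ \overleftarrow{S}_b(\alpha)=\sum_{\substack{p\text{ prime},\ \overleftarrow{p}\leq N\\ (\overleftarrow{p},b^3-b)=1}}e(\overleftarrow{p}\alpha)\log p. \] *)

(* Defs.v *)
From HB Require Import structures.
From mathcomp Require Import all_boot all_order all_algebra.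
From mathcomp Require Import all_classical all_reals all_analysis.
From mathcomp Require Import complex.
Set Implicit Arguments. Unset Strict Implicit. Unset Printing Implicit Defensive.
Import Order.TTheory GRing.Theory Num.Theory.
Local Open Scope ring_scope.

Definition digit (b i n : nat) : nat := (n %/ b ^ i) %% b.

(* number L of base-b digits of n > 0 (b >= 2): b^(L-1) <= n < b^L *)
Definition ndigits (b n : nat) : nat := (trunc_log b n).+1.

Definition drev (b n : nat) : nat :=
  (\sum_(i < ndigits b n) digit b i n * b ^ (ndigits b n - 1 - i))%N.

Definition ee (R : realType) (x : R) : R[i] :=
  Complex (cos (2 * pi * x)) (sin (2 * pi * x)).

(* The range p <= b*N is only a finite
   enumeration bound: every prime p with drev b p <= N satisfies p <= b*N
   (if b does not divide p then p < b^L <= b * drev p; otherwise p <= b). *)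
Definition Srev (R : realType) (b N : nat) (alpha : R) : R[i] :=
  \sum_(p < (b * N).+1 | prime p && (drev b p <= N)%N
                          && coprime (drev b p) (b ^ 3 - b))
     ee (((drev b p)%:R * alpha)) * real_complex R (ln (p%:R : R)).

(* Main.v *)
Require Import Defs.
From HB Require Import structures.
From mathcomp Require Import all_boot all_order all_algebra.
From mathcomp Require Import all_classical all_reals all_analysis.
From mathcomp Require Import complex.
Import Order.TTheory GRing.Theory Num.Theory.
Local Open Scope ring_scope.
From mathcomp Require Import ring lra zify.

Module Helpers.
Import numFieldTopology.Exports numFieldNormedType.Exports.
Section NatPart.
Local Open Scope nat_scope.

Definition prim n := \prod_(p < n.+1 | prime p) p.

Lemma primE n : prim n = \prod_(0 <= p < n.+1 | prime p) p.
Proof. by rewrite /prim big_mkord. Qed.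

Lemma primS n : prim n.+1 = prim n * (if prime n.+1 then n.+1 else 1).
Proof. by rewrite !primE big_mkcond big_nat_recr //= -big_mkcond. Qed.

Lemma coprime_fact p m : prime p -> m < p -> coprime p m`!.
Proof.
move=> pp; elim: m => [|m IH] lt; first by rewrite coprimen1.
rewrite factS coprimeMr IH ?andbT; last by apply: ltnW.
rewrite prime_coprime //; apply/negP => /dvdn_leq; lia.
Qed.

Lemma bin_le_sum n k : 'C(n, k) <= 2 ^ n.
Proof.
case: (leqP k n) => kn; last by rewrite bin_small.
have := expnDn 1 1 n; rewrite addn1 => ->.
rewrite (bigD1 (inord k)) //= inordK; last lia.
rewrite !exp1n muln1; lia.
Qed.

Lemma bin_mid m : 'C(m.*2.+1, m.+1) <= 2 * 4 ^ m.
Proof.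
have e : 'C(m.*2.+1, m) = 'C(m.*2.+1, m.+1).
  have hm : m = m.*2.+1 - m.+1 by lia.
  by rewrite [X in 'C(_, X)]hm bin_sub //; lia.
have := bin_le_sum (m.*2.+2) m.+1.
rewrite binS e (_ : 4 ^ m = 2 ^ m.*2); last by rewrite -mul2n expnM.
rewrite expnS expnS; lia.
Qed.

Lemma Q_dvd m : \prod_(m.+2 <= p < m.*2.+2 | prime p) p %| 'C(m.*2.+1, m.+1).
Proof.
set Q := \prod_(_ <= p < _ | _) p.
have cQ : coprime Q m`!.
  rewrite /Q big_nat_cond; apply: (big_ind (fun x => coprime x m`!)).
  - exact: coprime1n.
  - by move=> x y; rewrite coprimeMl => -> ->.
  - move=> i /andP[] /andP[h1 _] pi; apply: coprime_fact => //; lia.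
rewrite -(Gauss_dvdl _ cQ).
have ePi : \prod_(m.+2 <= k < m.*2.+2) k = 'C(m.*2.+1, m.+1) * m`!.
  have h1 := fact_split (_ : m.+1 <= m.*2.+1).
  have h2 := bin_fact (_ : m.+1 <= m.*2.+1).
  have hm : m.*2.+1 - m.+1 = m by lia.
  rewrite hm in h2.
  have : m.+1`! * \prod_(m.+2 <= k < m.*2.+2) k = m.+1`! * ('C(m.*2.+1, m.+1) * m`!).
    rewrite -h1; last lia.
    rewrite -h2; last lia.
    by rewrite mulnCA.
  by move/eqP; rewrite eqn_mul2l (negbTE (lt0n_neq0 (fact_gt0 _))) /= => /eqP.
rewrite -ePi (bigID prime) /=.
exact: dvdn_mulr.
Qed.

Lemma prim_le n : prim n <= 8 ^ n.
Proof.
elim/ltn_ind: n => n IH.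
case: (ltnP n 3) => n3.
  case: n n3 IH => [|[|[|n]]] n3 _; try (rewrite primE unlock /=; done); lia.
case: (boolP (odd n)) => on; last first.
  case: n on n3 IH => [|k] // on n3 IH.
  have npr : prime k.+1 = false.
    apply/negP => /even_prime [e|o]; [lia | by rewrite o in on].
  rewrite primS npr muln1.
  apply: leq_trans (IH k _) _ => //.
  by rewrite leq_exp2l.
have en : n = (n./2).*2.+1 by rewrite -[n in LHS](odd_double_half n) on add1n.
set m := n./2 in en.
have m1 : 0 < m by rewrite /m; lia.
have split : prim n = prim m.+1 * \prod_(m.+2 <= p < m.*2.+2 | prime p) p.
  by rewrite !primE en (@big_cat_nat _ _ _ m.+2) //=; lia.
have hQ : \prod_(m.+2 <= p < m.*2.+2 | prime p) p <= 2 * 4 ^ m.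
  apply: leq_trans (bin_mid m).
  by apply: dvdn_leq; [rewrite bin_gt0; lia | exact: Q_dvd].
have hP : prim m.+1 <= 8 ^ m.+1 by apply: IH; lia.
rewrite split.
apply: leq_trans (leq_mul hP hQ) _.
have h2 : 2 <= 2 ^ m by rewrite -{1}(expn1 2) leq_exp2l.
rewrite en (_ : 8 = 2 * 4) // !expnMn expnS expnS.
have h4 : 0 < 4 ^ m by rewrite expn_gt0.
have h4' : 0 < 4 ^ m.*2 by rewrite expn_gt0.
rewrite !expnS -!addnn !expnD.
nia.
Qed.
End NatPart.

Section Digits.
Local Open Scope nat_scope.
Variable b : nat.
Hypothesis hb : 2 <= b.

Lemma digitS i n : digit b i.+1 n = digit b i (n %/ b).
Proof. by rewrite /digit expnS divnMA. Qed.

Lemma digit0 n : digit b 0 n = n %% b.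
Proof. by rewrite /digit expn0 divn1. Qed.

Lemma eq_digits L : forall m n, m < b ^ L -> n < b ^ L ->
  (forall i, i < L -> digit b i m = digit b i n) -> m = n.
Proof.
elim: L => [|L IH] m n.
  by rewrite expn0 !ltnS !leqn0 => /eqP -> /eqP ->.
move=> hm hn hd.
rewrite (divn_eq m b) (divn_eq n b).
have b0 : 0 < b by lia.
have -> : m %/ b = n %/ b.
  apply: IH.
  - by rewrite ltn_divLR // -expnSr.
  - by rewrite ltn_divLR // -expnSr.
  - by move=> i iL; rewrite -!digitS; apply: hd.
have := hd 0 (ltn0Sn _); rewrite !digit0 => ->. done.
Qed.

Lemma digits_sum L : forall d : nat -> nat, (forall i, d i < b) ->
  \sum_(i < L) d i * b ^ i < b ^ L /\
  forall i, i < L -> digit b i (\sum_(i < L) d i * b ^ i) = d i.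
Proof.
have b0 : 0 < b by lia.
elim: L => [|L IH] d hd.
  by rewrite big_ord0 expn0; split.
have [h1 h2] := IH (fun i => d i.+1) (fun i => hd i.+1).
have ex : \sum_(i < L.+1) d i * b ^ i = (\sum_(i < L) d i.+1 * b ^ i) * b + d 0.
  rewrite big_ord_recl /= expn0 muln1 addnC; congr (_ + _).
  rewrite big_distrl /=; apply: eq_bigr => i _.
  by rewrite /bump /= expnS add1n mulnCA mulnC.
rewrite ex; set y := \sum_(i < L) _.
split.
  have := hd 0; rewrite expnS.
  have : y < b ^ L by [].
  nia.
case=> [|i] iL.
  by rewrite digit0 modnMDl modn_small.
by rewrite digitS divnMDl // divn_small // addn0 h2.
Qed.

Lemma drev_props m : 0 < m -> ~~ (b %| m) ->
  let k := trunc_log b m in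
  drev b m < b ^ k.+1 /\ b ^ k <= drev b m /\
  forall j, j < k.+1 -> digit b j (drev b m) = digit b (k - j) m.
Proof.
move=> m0 ndm k.
have b0 : 0 < b by lia.
have e : drev b m = \sum_(j < k.+1) digit b (k - j) m * b ^ j.
  rewrite /drev /ndigits -/k (reindex_inj rev_ord_inj) /=.
  apply: eq_bigr => j _.
  have hj := ltn_ord j.
  have -> : k.+1 - j.+1 = k - j by lia.
  by have -> : k.+1 - 1 - (k - j) = j by lia.
have [h1 h2] := digits_sum k.+1 (fun j => digit b (k - j) m) (fun j => ltn_pmod _ b0).
rewrite e; split => //; split; last by move=> j jk; rewrite h2.
have := h2 k (ltnSn k); rewrite subnn digit0.
case: (leqP (b ^ k) (\sum_(j < k.+1) digit b (k - j) m * b ^ j)) => // hs.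
rewrite /digit divn_small // mod0n => /esym /eqP.
by rewrite -/(dvdn b m) (negbTE ndm).
Qed.

Lemma ndigits_drev m : 0 < m -> ~~ (b %| m) -> ndigits b (drev b m) = ndigits b m.
Proof.
move=> m0 ndm; have [h1 [h2 _]] := drev_props m m0 ndm.
by rewrite /ndigits (@trunc_log_eq b (trunc_log b m)) // h2 h1.
Qed.

Lemma drev_inj m n : 0 < m -> 0 < n -> ~~ (b %| m) -> ~~ (b %| n) ->
  drev b m = drev b n -> m = n.
Proof.
move=> m0 n0 dm dn e.
have eL : trunc_log b m = trunc_log b n.
  have := ndigits_drev m m0 dm; rewrite e ndigits_drev // /ndigits.
  by case.
have [_ [_ hm]] := drev_props m m0 dm.
have [_ [_ hn]] := drev_props n n0 dn.
have bm := trunc_log_bounds (_ : 1 < b) m0.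
have bn := trunc_log_bounds (_ : 1 < b) n0.
set k := trunc_log b m in eL hm bm.
apply: (@eq_digits k.+1).
- by case/andP: (bm hb).
- by rewrite eL; case/andP: (bn hb).
move=> i ik.
have hki : k - i < k.+1 by lia.
have := hm (k - i) hki.
rewrite e hn; last by rewrite -eL.
rewrite -eL.
by have -> : k - (k - i) = i by lia.
Qed.
End Digits.

Section A.
Variable R : realType.
Local Open Scope complex_scope.
Lemma sumc (I : finType) (P : pred I) (a c : I -> R) :
  \sum_(i | P i) (a i +i* c i) = (\sum_(i | P i) a i) +i* (\sum_(i | P i) c i).
Proof.
apply: (big_rec3 (fun x y z => x = y +i* z)) => // i x y z _ ->.
by [].
Qed.
Local Close Scope complex_scope.

Lemma normc_sum_sq (I : finType) (P : pred I) (n w : I -> R) (al : R) :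
 (Normc.normc (\sum_(p | P p) ee (n p * al) * real_complex R (w p))) ^+ 2 =
 \sum_(pq | P pq.1 && P pq.2) w pq.1 * w pq.2 * cos (2 * pi * (n pq.1 - n pq.2) * al).
Proof.
have e : \sum_(p | P p) ee (n p * al) * real_complex R (w p) =
   Complex (\sum_(p | P p) w p * cos (2 * pi * (n p * al)))
           (\sum_(p | P p) w p * sin (2 * pi * (n p * al))).
  rewrite -sumc; apply: eq_bigr => p _.
  rewrite /ee /=. congr Complex; rewrite /=; lra.
rewrite e /Normc.normc sqr_sqrtr; last by rewrite addr_ge0 // sqr_ge0.
rewrite -(pair_big P P (fun p q => w p * w q * cos (2 * pi * (n p - n q) * al))) /=.
rewrite !expr2 !mulr_suml -big_split /=.
apply: eq_bigr => p _.
rewrite !mulr_sumr -big_split /=.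
apply: eq_bigr => q _.
have -> : 2 * pi * (n p - n q) * al = 2 * pi * (n p * al) - 2 * pi * (n q * al) by ring.
rewrite cosB; ring.
Qed.


Lemma lin_der (c x : R) : is_derive x (1:R) (fun x => c * x) c.
Proof.
have h := is_deriveZ c (is_derive_id x (1:R)).
rewrite /GRing.scale /= mulr1 in h. exact: h.
Qed.
Lemma F_der (c x : R) : c != 0 -> is_derive x (1:R) (fun x => c^-1 * sin (c * x)) (cos (c * x)).
Proof.
move=> c0.
have h2 := is_derive1_comp (is_derive_sin (c * x)) (lin_der c x).
have h := is_deriveZ c^-1 h2.
rewrite /GRing.scale /= [cos _ * c]mulrC mulrA mulVf // mul1r in h. exact: h.
Qed.
Lemma der_cont (f : R -> R) (x : R) df : is_derive x (1:R) f df -> {for x, continuous f}.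
Proof. by move=> h; apply/differentiable_continuous/derivable1_diffP; exact: h.(ex_derive). Qed.

Lemma int_cos (c : R) : sin c = 0 -> c != 0 ->
  (\int[lebesgue_measure]_(x in `[0%R, 1%R]) (cos (c * x))%:E = 0)%E.
Proof.
move=> sk c0.
pose F : R -> R := fun x => c^-1 * sin (c * x).
have dF (x : R) : is_derive x (1:R) F (cos (c * x)) by exact: F_der.
have cF (x : R) : {for x, continuous F} by exact: der_cont (dF x).
rewrite (@continuous_FTC2 _ _ F).
- rewrite /F mulr1 mulr0 sin0 sk mulr0. by rewrite subee.
- by rewrite ltr01.
- apply/continuous_subspaceT => x.
  exact: der_cont (is_derive1_comp (is_derive_cos (c * x)) (lin_der c x)).
- split.
  + by move=> x _; exact: (dF x).(ex_derive).
  + exact/cvg_at_right_filter/cF.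
  + exact/cvg_at_left_filter/cF.
- by move=> x _; rewrite derive1E; apply: (dF x).(derive_val).
Qed.

Lemma int_one :
  (\int[lebesgue_measure]_(x in `[0%R, 1%R]) (cos ((0:R) * x))%:E = 1)%E.
Proof.
have dF (x : R) : is_derive x (1:R) id 1 by exact: is_derive_id.
rewrite (@continuous_FTC2 _ _ id).
- by rewrite /= -EFinB subr0.
- by rewrite ltr01.
- apply/continuous_subspaceT => x.
  exact: der_cont (is_derive1_comp (is_derive_cos (0 * x)) (lin_der 0 x)).
- split.
  + by move=> x _; exact: (dF x).(ex_derive).
  + apply/cvg_at_right_filter; exact: cvg_id.
  + apply/cvg_at_left_filter; exact: cvg_id.
- by move=> x _; rewrite derive1E (dF x).(derive_val) mul0r cos0.
Qed.

Lemma sc2pi (m : nat) : sin (2 * pi * m%:R) = 0 :> R /\ cos (2 * pi * m%:R) = 1 :> R.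
Proof.
have e : 2 * pi * m%:R = 0 + (pi *+ 2) *+ m :> R.
  by rewrite add0r !mulr_natr; ring.
rewrite e (periodicn (@sinD2pi R) m 0) (periodicn (@cosD2pi R) m 0).
by rewrite sin0 cos0.
Qed.

Lemma sin_diff (a c : nat) : sin (2 * pi * (a%:R - c%:R)) = 0 :> R.
Proof.
rewrite mulrBr sinD sinN cosN.
have [s1 c1] := sc2pi a; have [s2 c2] := sc2pi c.
by rewrite s1 s2 c1 c2; ring.
Qed.

Lemma integ_cos (k r : R) :
  lebesgue_measure.-integrable `[0%R, 1%R] (fun x => (r * cos (k * x))%:E).
Proof.
apply: (@continuous_compact_integrable R (fun x => r * cos (k * x))).
  exact: segment_compact.
apply/continuous_subspaceT => x.
exact: der_cont (is_deriveZ r (is_derive1_comp (is_derive_cos (k * x)) (lin_der k x))).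
Qed.

Lemma integ_cos1 (k : R) :
  lebesgue_measure.-integrable `[0%R, 1%R] (fun x => (cos (k * x))%:E).
Proof.
apply: (@continuous_compact_integrable R (fun x => cos (k * x))).
  exact: segment_compact.
apply/continuous_subspaceT => x.
exact: der_cont (is_derive1_comp (is_derive_cos (k * x)) (lin_der k x)).
Qed.

Lemma int_term (a c : nat) (r : R) :
  (\int[lebesgue_measure]_(x in `[0%R, 1%R]) (r * cos (2 * pi * (a%:R - c%:R) * x))%:E
   = (if a == c then r else 0)%:E)%E.
Proof.
under eq_integral do rewrite EFinM.
rewrite integralZl //; last first.
  exact: integ_cos1.
case: eqP => [->|ne].
  rewrite subrr mulr0 int_one. by rewrite mule1.
rewrite int_cos ?mule0 //; first exact: sin_diff.
rewrite !mulf_eq0 negb_or negb_or pnatr_eq0 (gt_eqF (pi_gt0 R)) /=.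
by rewrite subr_eq0 eqr_nat; apply/eqP.
Qed.

Lemma int_sum_cos (J : finType) (Q : pred J) (c : J -> R) (d1 d2 : J -> nat) :
  (\int[lebesgue_measure]_(x in `[0%R, 1%R])
     (\sum_(j | Q j) c j * cos (2 * pi * ((d1 j)%:R - (d2 j)%:R) * x))%:E
   = (\sum_(j | Q j && (d1 j == d2 j)) c j)%:E)%E.
Proof.
under eq_integral do rewrite -sumEFin.
rewrite integral_sum //; last by move=> j; exact: integ_cos.
under eq_bigr do rewrite int_term.
by rewrite sumEFin big_mkcondr /=.
Qed.

Lemma sum_le1 (I : finType) (A : pred I) (F : I -> R) (M : R) :
  (forall i j, A i -> A j -> i = j) -> (forall i, A i -> F i <= M) -> 0 <= M ->
  \sum_(i | A i) F i <= M.
Proof.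
move=> u hF M0; case: (pickP A) => [i Ai|A0].
  rewrite (bigD1 i) //= big1 ?addr0; first exact: hF.
  move=> j /andP[Aj /eqP ne]; exfalso; apply: ne; exact: u.
by rewrite big_pred0.
Qed.

Lemma ln_prodn (I : Type) (r : seq I) (F : I -> nat) : (forall i, (0 < F i)%N) ->
  ln ((\prod_(i <- r) F i)%:R : R) = \sum_(i <- r) ln ((F i)%:R : R).
Proof.
move=> hF; elim: r => [|x r IH]; first by rewrite !big_nil ln1.
rewrite !big_cons natrM lnM ?IH // posrE ltr0n //.
by apply: prodn_gt0.
Qed.

Lemma sum_ln_primes (n : nat) :
  \sum_(p < n.+1 | prime p) ln ((p : nat)%:R : R) <= (n%:R) * ln 8.
Proof.
have e : \sum_(p < n.+1 | prime p) ln ((p : nat)%:R : R) = ln ((prim n)%:R).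
  rewrite /prim [in RHS]big_mkcond [in LHS]big_mkcond /= ln_prodn; last first.
    by move=> i; case: ifP => // /prime_gt0.
  by apply: eq_bigr => i _; case: ifP => // _; rewrite ln1.
rewrite e.
have h8 : (prim n)%:R <= (8 ^ n)%:R :> R by rewrite ler_nat prim_le.
have p0 : (0 < prim n)%N by rewrite /prim; apply: prodn_cond_gt0 => i; exact: prime_gt0.
rewrite -ler_ln ?posrE ?ltr0n ?expn_gt0 // in h8.
by rewrite natrX lnXn // in h8; rewrite mulr_natl.
Qed.

Lemma fiber (b N : nat) (hb : (2 <= b)%N) (p0 : nat) :
  \sum_(q < (b * N).+1 | (prime q && (drev b q <= N)%N && coprime (drev b q) (b ^ 3 - b))
       && (drev b p0 == drev b q)) ln ((q : nat)%:R : R)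
  <= 2 * ln ((b * N)%:R : R).
Proof.
have L0 : forall q : 'I_(b * N).+1, prime q -> ln ((q : nat)%:R : R) <= ln ((b * N)%:R).
  move=> q pq; have q0 := prime_gt0 pq.
  have qN : (q <= b * N)%N by rewrite -ltnS.
  rewrite ler_ln ?posrE ?ltr0n ?ler_nat //; lia.
have Lg : 0 <= ln ((b * N)%:R : R).
  case: (posnP (b * N)) => [->|bN]; first by rewrite ln0.
  by apply: ln_ge0; rewrite ler1n.
rewrite (bigID (fun q : 'I_(b * N).+1 => (b %| q)%N)) /=.
have -> : 2 * ln ((b * N)%:R : R) = ln ((b * N)%:R) + ln ((b * N)%:R) by ring.
apply: lerD; apply: sum_le1 => //.
- move=> i j /andP[/andP[/andP[/andP[pi _] _] _] di] /andP[/andP[/andP[/andP[pj _] _] _] dj].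
  apply: val_inj => /=.
  have hb1 : b != 1%N by lia.
  by rewrite -(prime_nt_dvdP pi hb1 di) -(prime_nt_dvdP pj hb1 dj).
- by move=> i /andP[/andP[/andP[/andP[pi _] _] _] _]; exact: L0.
- move=> i j /andP[/andP[/andP[/andP[pi _] _] /eqP ei] di] /andP[/andP[/andP[/andP[pj _] _] /eqP ej] dj].
  apply: val_inj => /=.
  apply: (@drev_inj b hb) => //; try exact: prime_gt0.
  by rewrite -ei -ej.
- by move=> i /andP[/andP[/andP[/andP[pi _] _] _] _]; exact: L0.
Qed.
End A.
End Helpers.
Import Helpers.

Theorem lemma4p11 (R : realType) (b : nat) (hb : (2 <= b)%N) :
  exists C : R, 0 < C /\
    forall N : nat, (2 <= N)%N ->
      (\int[lebesgue_measure]_(alpha in `[0%R, 1%R])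
          ((Normc.normc (Srev b N alpha)) ^+ 2)%:E
       <= (C * N%:R * ln (N%:R : R))%:E)%E.
Proof.
have b0 : (0 < b)%N by lia.
have l2 : 0 < ln (2 : R) by apply: ln_gt0; lra.
have l8 : 0 < ln (8 : R) by apply: ln_gt0; lra.
have lb : 0 <= ln (b%:R : R) by apply: ln_ge0; rewrite ler1n.
pose K := ln (b%:R : R) / ln 2 + 1.
have K1 : 1 <= K by rewrite /K lerDr divr_ge0 // ltW.
exists (2 * K * b%:R * ln 8); split.
  apply: mulr_gt0 => //; apply: mulr_gt0; last by rewrite ltr0n.
  by apply: mulr_gt0; lra.
move=> N N2.
pose P := fun p : 'I_(b * N).+1 =>
  prime p && (drev b p <= N)%N && coprime (drev b p) (b ^ 3 - b).
pose w := fun p : 'I_(b * N).+1 => ln ((p : nat)%:R : R).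
have E : forall al : R, (Normc.normc (Srev b N al)) ^+ 2 =
   \sum_(pq | P pq.1 && P pq.2) (w pq.1 * w pq.2) *
        cos (2 * pi * ((drev b pq.1)%:R - (drev b pq.2)%:R) * al).
  move=> al; exact: (@normc_sum_sq R _ P (fun p => (drev b p)%:R) w al).
under eq_integral => al _ do rewrite E.
rewrite (@int_sum_cos R _ (fun pq : 'I_(b * N).+1 * 'I_(b * N).+1 => P pq.1 && P pq.2)
   (fun pq => w pq.1 * w pq.2) (fun pq => drev b pq.1) (fun pq => drev b pq.2)).
rewrite lee_fin.
have wge : forall p, 0 <= w p.
  move=> p; rewrite /w; case: (posnP p) => [->|p0]; first by rewrite ln0.
  by apply: ln_ge0; rewrite ler1n.
have S1 : \sum_(j | (P j.1 && P j.2) && (drev b j.1 == drev b j.2)) w j.1 * w j.2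
   = \sum_(p | P p) \sum_(q | P q && (drev b p == drev b q)) w p * w q.
  rewrite pair_big_dep /=; apply: eq_bigl => j; by rewrite andbA.
set L := ln ((b * N)%:R : R).
have S2 : \sum_(p | P p) \sum_(q | P q && (drev b p == drev b q)) w p * w q
   <= \sum_(p | P p) w p * (2 * L).
  apply: ler_sum => p _; rewrite -mulr_sumr.
  by apply: ler_wpM2l; [exact: wge | exact: (@fiber R b N hb p)].
have S3 : \sum_(p | P p) w p <= (b * N)%:R * ln 8.
  apply: le_trans (@sum_ln_primes R (b * N)).
  rewrite [X in X <= _]big_mkcond [X in _ <= X]big_mkcond /=.
  apply: ler_sum => p _.
  case: ifP => [/andP[/andP[pp _] _]|_]; first by rewrite pp.
  by case: ifP => // _; exact: wge.
have LN : L <= K * ln (N%:R : R).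
  have N0 : (0 < N)%N by lia.
  rewrite /L natrM lnM ?posrE ?ltr0n // /K.
  have h2N : ln (2 : R) <= ln (N%:R : R).
    have N2r : (2:R) <= N%:R by rewrite (ler_nat R 2 N).
    by rewrite ler_ln ?posrE; lra.
  have hq : 1 <= ln (N%:R : R) / ln 2 by rewrite ler_pdivlMr // mul1r.
  have : ln (b%:R : R) <= ln (b%:R : R) * (ln (N%:R : R) / ln 2).
    by rewrite ler_peMr.
  have e : (ln (b%:R : R) / ln 2 + 1) * ln (N%:R) =
     ln (b%:R : R) * (ln (N%:R : R) / ln 2) + ln (N%:R) by ring.
  rewrite e; lra.
have X0 : 0 <= \sum_(p | P p) w p by apply: sumr_ge0 => p _.
have L0 : 0 <= L by rewrite /L; case: (posnP (b * N)) => [->|bN]; [rewrite ln0 | apply: ln_ge0; rewrite ler1n].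
have lN0 : 0 <= ln (N%:R : R) by apply: ln_ge0; rewrite ler1n; lia.
rewrite S1; apply: le_trans S2 _.
rewrite -mulr_suml.
set X := \sum_(p | P p) w p in S3 X0 *.
apply: (@le_trans _ _ (X * (2 * (K * ln (N%:R : R))))).
  apply: ler_wpM2l => //; lra.
apply: (@le_trans _ _ ((b * N)%:R * ln 8 * (2 * (K * ln (N%:R : R))))).
  apply: ler_wpM2r => //; apply: mulr_ge0 => //; apply: mulr_ge0 => //; lra.
rewrite le_eqVlt; apply/orP; left; apply/eqP; rewrite natrM; ring.
Qed.
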